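(* Let $(G,P,g)$ be the manifold in the context and $D$ the connection defined there. Then $D$ is flat: its curvature tensor $D_xD_yz-D_yD_xz-D_{[x,y]}z$ vanishes identically.
   Context: $G$ is a 4-dimensional real connected Lie group with Lie algebra having a basis $\{X_1,\dots,X_4\}$ of left-invariant vector fields satisfying, for real numbers $\lambda_1,\dots,\lambda_4$: $[X_1,X_2]=-[X_3,X_4]=\lambda_1X_1+\lambda_2X_2+\lambda_3X_3+\lambda_4X_4$, $[X_1,X_3]=[X_2,X_4]=\lambda_4X_1-\lambda_3X_2+\lambda_2X_3-\lambda_1X_4$, $[X_2,X_3]=[X_1,X_4]=0$. $P$ is the left-invariant tensor with $PX_1=X_3$, $PX_2=X_4$, $PX_3=X_1$, $PX_4=X_2$, and $g$ the left-invariant metric making $\{X_i\}$ orthonormal. Let $\nabla$ be the Levi-Civita connection of $g$, $F(x,y,z)=g((\nabla_xP)y,z)$, $\theta(x)=\sum_iF(X_i,X_i,x)$ the Lee form, $\Omega$ the vector field with $g(\Omega,x)=\theta(x)$, and $D_xy=\nabla_xy+\frac14\{g(x,y)P\Omega-\theta(Py)x\}$. *)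

(* Defs.v *)
From Stdlib Require Import Reals.
Open Scope R_scope.

(* The Lie algebra g of G, identified with left-invariant vector fields,
   written in coordinates w.r.t. the basis X1,...,X4:
   v = c1 v * X1 + c2 v * X2 + c3 v * X3 + c4 v * X4. *)
Record V4 : Type := mkV { c1 : R; c2 : R; c3 : R; c4 : R }.

Definition vadd (u v : V4) : V4 :=
  mkV (c1 u + c1 v) (c2 u + c2 v) (c3 u + c3 v) (c4 u + c4 v).
Definition vscal (a : R) (v : V4) : V4 :=
  mkV (a * c1 v) (a * c2 v) (a * c3 v) (a * c4 v).
Definition vsub (u v : V4) : V4 := vadd u (vscal (-1) v).
Definition vzero : V4 := mkV 0 0 0 0.

Definition X1 : V4 := mkV 1 0 0 0.
Definition X2 : V4 := mkV 0 1 0 0.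
Definition X3 : V4 := mkV 0 0 1 0.
Definition X4 : V4 := mkV 0 0 0 1.

Definition gmet (u v : V4) : R :=
  c1 u * c1 v + c2 u * c2 v + c3 u * c3 v + c4 u * c4 v.

Definition Pmap (v : V4) : V4 := mkV (c3 v) (c4 v) (c1 v) (c2 v).

Definition vecA (l1 l2 l3 l4 : R) : V4 := mkV l1 l2 l3 l4.
Definition vecB (l1 l2 l3 l4 : R) : V4 := mkV l4 (- l3) l2 (- l1).

(* The Lie bracket, the bilinear antisymmetric extension of
   [X1,X2] = -[X3,X4] = A, [X1,X3] = [X2,X4] = B, [X2,X3] = [X1,X4] = 0. *)
Definition lie (l1 l2 l3 l4 : R) (u v : V4) : V4 :=
  vadd
    (vscal (c1 u * c2 v - c2 u * c1 v - (c3 u * c4 v - c4 u * c3 v))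
           (vecA l1 l2 l3 l4))
    (vscal (c1 u * c3 v - c3 u * c1 v + (c2 u * c4 v - c4 u * c2 v))
           (vecB l1 l2 l3 l4)).

Definition is_torsion_free (l1 l2 l3 l4 : R) (nabla : V4 -> V4 -> V4) : Prop :=
  forall x y, vsub (nabla x y) (nabla y x) = lie l1 l2 l3 l4 x y.

(* Metric compatibility on left-invariant fields (g(y,z) is constant, so
   x(g(y,z)) = 0). *)
Definition is_metric (nabla : V4 -> V4 -> V4) : Prop :=
  forall x y z, gmet (nabla x y) z + gmet y (nabla x z) = 0.

Definition nablaP (nabla : V4 -> V4 -> V4) (x y : V4) : V4 :=
  vsub (nabla x (Pmap y)) (Pmap (nabla x y)).

Definition Ften (nabla : V4 -> V4 -> V4) (x y z : V4) : R :=
  gmet (nablaP nabla x y) z.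

Definition theta (nabla : V4 -> V4 -> V4) (x : V4) : R :=
  Ften nabla X1 X1 x + Ften nabla X2 X2 x + Ften nabla X3 X3 x
  + Ften nabla X4 X4 x.

(* Omega, the g-dual of theta: g(Omega, x) = theta(x) (X_i orthonormal). *)
Definition Omega (nabla : V4 -> V4 -> V4) : V4 :=
  mkV (theta nabla X1) (theta nabla X2) (theta nabla X3) (theta nabla X4).

Definition Dconn (nabla : V4 -> V4 -> V4) (x y : V4) : V4 :=
  vadd (nabla x y)
       (vscal (1/4) (vsub (vscal (gmet x y) (Pmap (Omega nabla)))
                          (vscal (theta nabla (Pmap y)) x))).

Definition curvD (l1 l2 l3 l4 : R) (nabla : V4 -> V4 -> V4) (x y z : V4) : V4 :=
  vsub (vsub (Dconn nabla x (Dconn nabla y z)) (Dconn nabla y (Dconn nabla x z)))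
       (Dconn nabla (lie l1 l2 l3 l4 x y) z).

(* Main.v *)
Require Import Defs.
From Stdlib Require Import Reals Lra.
Open Scope R_scope.

Definition kz (l1 l2 l3 l4 : R) (x y z : V4) : R :=
  /2 * (gmet (lie l1 l2 l3 l4 x y) z - gmet (lie l1 l2 l3 l4 y z) x
        + gmet (lie l1 l2 l3 l4 z x) y).

Definition NN (l1 l2 l3 l4 : R) (x y : V4) : V4 :=
  mkV (kz l1 l2 l3 l4 x y X1) (kz l1 l2 l3 l4 x y X2)
      (kz l1 l2 l3 l4 x y X3) (kz l1 l2 l3 l4 x y X4).

Lemma gsym : forall u v, gmet u v = gmet v u.
Proof. intros [] []; unfold gmet; simpl; ring. Qed.

Lemma gsub : forall u v w, gmet (vsub u v) w = gmet u w - gmet v w.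
Proof. intros [] [] []; unfold gmet, vsub, vadd, vscal; simpl; ring. Qed.

Lemma koszul : forall l1 l2 l3 l4 nabla,
  is_torsion_free l1 l2 l3 l4 nabla -> is_metric nabla ->
  forall x y z, gmet (nabla x y) z = kz l1 l2 l3 l4 x y z.
Proof.
  intros l1 l2 l3 l4 nabla T M x y z.
  assert (T1 := f_equal (fun v => gmet v z) (T x y)).
  assert (T2 := f_equal (fun v => gmet v x) (T y z)).
  assert (T3 := f_equal (fun v => gmet v y) (T z x)).
  simpl in T1, T2, T3. rewrite gsub in T1, T2, T3.
  assert (M1 := M x y z). assert (M2 := M y z x). assert (M3 := M z x y).
  rewrite (gsym y) in M1. rewrite (gsym z) in M2. rewrite (gsym x) in M3.
  unfold kz. lra.
Qed.

Lemma nablaE : forall l1 l2 l3 l4 nabla,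
  is_torsion_free l1 l2 l3 l4 nabla -> is_metric nabla ->
  forall x y, nabla x y = NN l1 l2 l3 l4 x y.
Proof.
  intros l1 l2 l3 l4 nabla T M x y.
  unfold NN. rewrite <- !(koszul _ _ _ _ _ T M).
  destruct (nabla x y); unfold gmet; simpl. f_equal; ring.
Qed.

Definition N2 (l1 l2 l3 l4 : R) (x y : V4) : V4 :=
  let a1 := Defs.c1 x in let a2 := Defs.c2 x in let a3 := Defs.c3 x in let a4 := Defs.c4 x in
  let b1 := Defs.c1 y in let b2 := Defs.c2 y in let b3 := Defs.c3 y in let b4 := Defs.c4 y in
  mkV (a1*b2*l1 + a1*b3*l4 + a2*b2*l2 + a2*b4*l4 - a3*b4*l1 + a3*b3*l2)
      (- a1*b1*l1 - a1*b3*l3 - a2*b1*l2 - a2*b4*l3 - a4*b4*l1 + a4*b3*l2)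
      (a1*b2*l3 - a1*b1*l4 - a4*b2*l2 - a3*b1*l2 - a3*b4*l3 - a4*b4*l4)
      (a2*b2*l3 + a4*b2*l1 - a2*b1*l4 + a3*b1*l1 + a3*b3*l3 + a4*b3*l4).
Lemma V4ext : forall u v, Defs.c1 u = Defs.c1 v -> Defs.c2 u = Defs.c2 v ->
  Defs.c3 u = Defs.c3 v -> Defs.c4 u = Defs.c4 v -> u = v.
Proof. intros [] []; cbn; intros; subst; reflexivity. Qed.


Lemma nablaE2 : forall l1 l2 l3 l4 nabla,
  is_torsion_free l1 l2 l3 l4 nabla -> is_metric nabla ->
  forall x y, nabla x y = N2 l1 l2 l3 l4 x y.
Proof.
  intros l1 l2 l3 l4 nabla T M x y.
  rewrite (nablaE _ _ _ _ _ T M). destruct x, y.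
  unfold NN, N2, kz, lie, vecA, vecB, gmet, vsub, vadd, vscal, X1, X2, X3, X4.
  cbn [Defs.c1 Defs.c2 Defs.c3 Defs.c4]. f_equal; field.
Qed.

Lemma OmegaE : forall l1 l2 l3 l4 nabla,
  is_torsion_free l1 l2 l3 l4 nabla -> is_metric nabla ->
  Omega nabla = mkV (4*l4) (-4*l3) (-4*l2) (4*l1).
Proof.
  intros l1 l2 l3 l4 nabla T M.
  unfold Omega, theta, Ften, nablaP. rewrite !(nablaE2 _ _ _ _ _ T M).
  unfold N2, gmet, Pmap, vsub, vadd, vscal, X1, X2, X3, X4.
  cbn [Defs.c1 Defs.c2 Defs.c3 Defs.c4]. f_equal; ring.
Qed.

Definition D2 (l1 l2 l3 l4 : R) (x y : V4) : V4 :=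
  let a1 := Defs.c1 x in let a2 := Defs.c2 x in let a3 := Defs.c3 x in let a4 := Defs.c4 x in
  let b1 := Defs.c1 y in let b2 := Defs.c2 y in let b3 := Defs.c3 y in let b4 := Defs.c4 y in
  let g := a1*b1 + a2*b2 + a3*b3 + a4*b4 in
  let t := l4*b3 - l3*b4 - l2*b1 + l1*b2 in
  mkV (a1*b2*l1 + a1*b3*l4 + a2*b2*l2 + a2*b4*l4 - a3*b4*l1 + a3*b3*l2 - g*l2 - t*a1)
      (- a1*b1*l1 - a1*b3*l3 - a2*b1*l2 - a2*b4*l3 - a4*b4*l1 + a4*b3*l2 + g*l1 - t*a2)
      (a1*b2*l3 - a1*b1*l4 - a4*b2*l2 - a3*b1*l2 - a3*b4*l3 - a4*b4*l4 + g*l4 - t*a3)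
      (a2*b2*l3 + a4*b2*l1 - a2*b1*l4 + a3*b1*l1 + a3*b3*l3 + a4*b3*l4 - g*l3 - t*a4).

Ltac crush := apply V4ext; unfold gmet; cbn [Defs.c1 Defs.c2 Defs.c3 Defs.c4 D2 N2 gmet Pmap vsub vadd vscal X1 X2 X3 X4 lie vecA vecB vzero].

Lemma DE : forall l1 l2 l3 l4 nabla,
  is_torsion_free l1 l2 l3 l4 nabla -> is_metric nabla ->
  forall x y, Dconn nabla x y = D2 l1 l2 l3 l4 x y.
Proof.
  intros l1 l2 l3 l4 nabla T M x y.
  unfold Dconn, theta, Ften, nablaP.
  rewrite (OmegaE _ _ _ _ _ T M), !(nablaE2 _ _ _ _ _ T M).
  crush; field.
Qed.

Theorem proposition8p5 :
  forall (l1 l2 l3 l4 : R) (nabla : V4 -> V4 -> V4),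
    is_torsion_free l1 l2 l3 l4 nabla ->
    is_metric nabla ->
    forall x y z : V4, curvD l1 l2 l3 l4 nabla x y z = vzero.
Proof.
  intros l1 l2 l3 l4 nabla T M x y z.
  unfold curvD. rewrite !(DE _ _ _ _ _ T M).
  destruct x as [x1 x2 x3 x4], y as [y1 y2 y3 y4], z as [z1 z2 z3 z4].
  crush; ring.
Qed.
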